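(* Let $b\geq 2$ be fixed. For all sufficiently large $N$, \[ \frac{N^2}{16b^2}\leq\mathcal{S}_{1,2}(N)\leq\frac{N^2}{2}\qquad\text{and}\qquad \frac{N^2}{8b}\leq\mathcal{S}_{2,1}(N)\leq\frac{N^2}{2}. \] In particular $\mathcal{S}_{1,2}(N),\mathcal{S}_{2,1}(N)\asymp_b N^2$.
   Context: For a positive integer $n$ with $L$ digits in base $b$, $n=\sum_{0\leq i<L}\varepsilon_i(n)b^i$ ($\varepsilon_i(n)\in\{0,\dots,b-1\}$, $\varepsilon_{L-1}(n)\neq0$), its digital reverse is $\overleftarrow{n}=\sum_{0\leq i<L}\varepsilon_i(n)b^{L-1-i}$. For a positive integer $N$, \[ \mathcal{S}_{1,2}(N)=\sum_{\substack{n_1,n_2,n_3\leq N\\ n_1+n_2+n_3=N\\ (\overleftarrow{n_2}\,\overleftarrow{n_3},b)=1}}1,\qquad \mathcal{S}_{2,1}(N)=\sum_{\substack{n_1,n_2,n_3\leq N\\ n_1+n_2+n_3=N\\ (\overleftarrow{n_3},b)=1}}1, \] sums over positive integers $n_1,n_2,n_3$; $(\cdot,\cdot)$ is gcd. *)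

(* Defs.v *)
From mathcomp Require Import all_boot.
Set Implicit Arguments. Unset Strict Implicit. Unset Printing Implicit Defensive.

(* base-b digits of n, least significant first: [eps_0; eps_1; ...; eps_{L-1}];
   fuel n suffices since n decreases by at least a factor 2 when b >= 2. *)
Fixpoint digits_aux (b fuel n : nat) : seq nat :=
  match fuel with
  | 0 => [::]
  | fuel'.+1 => if n == 0 then [::] else (n %% b) :: digits_aux b fuel' (n %/ b)
  end.

Definition digits (b n : nat) : seq nat := digits_aux b n n.

(* digital reverse: sum_i eps_i(n) b^(L-1-i) *)
Definition digrev (b n : nat) : nat := foldl (fun acc d => acc * b + d) 0 (digits b n).

Definition S12 (b N : nat) : nat :=
  \sum_(1 <= n1 < N.+1) \sum_(1 <= n2 < N.+1) \sum_(1 <= n3 < N.+1)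
    ((n1 + n2 + n3 == N) && coprime (digrev b n2 * digrev b n3) b).

Definition S21 (b N : nat) : nat :=
  \sum_(1 <= n1 < N.+1) \sum_(1 <= n2 < N.+1) \sum_(1 <= n3 < N.+1)
    ((n1 + n2 + n3 == N) && coprime (digrev b n3) b).

(* Main.v *)
Require Import Defs.
From mathcomp Require Import all_boot.
From mathcomp Require Import zify.

Lemma leq_sum_nat (m n : nat) (F G : nat -> nat) :
  (forall i, m <= i < n -> F i <= G i) ->
  \sum_(m <= i < n) F i <= \sum_(m <= i < n) G i.
Proof.
move=> H; rewrite big_nat_cond [X in _ <= X]big_nat_cond.
by apply: leq_sum => i /andP [Hi _]; apply: H.
Qed.

Lemma restr (a c N : nat) (F : nat -> nat) : 1 <= a -> a <= c -> c <= N.+1 ->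
  \sum_(a <= i < c) F i <= \sum_(1 <= i < N.+1) F i.
Proof.
move=> h1 h2 h3.
rewrite (@big_cat_nat _ _ _ a 1 N.+1) //; last by lia.
rewrite (@big_cat_nat _ _ _ c a N.+1) //=.
lia.
Qed.

Lemma sum_eq (m N M : nat) :
  \sum_(1 <= i < M.+1) (i + m == N) = (m < N) && (N - m <= M).
Proof.
elim: M => [|M IH]; first by rewrite big_geq //; case: (ltnP m N) => h //=; lia.
rewrite big_nat_recr //= IH.
have [h|h] := ltnP m N; have [h2|h2] := leqP (N - m) M;
  have [h3|h3] := eqVneq (M.+1 + m) N; rewrite /=; lia.
Qed.

Lemma sum_lt (i N M : nat) :
  \sum_(1 <= j < M.+1) (i + j < N) = minn M (N - i.+1).
Proof.
elim: M => [|M IH]; first by rewrite big_geq //; lia.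
rewrite big_nat_recr //= IH.
have [h|h] := ltnP (i + M.+1) N; rewrite /=; lia.
Qed.

Lemma gauss (T M : nat) : M <= T ->
  2 * \sum_(1 <= i < M.+1) (T - i) = M * (2 * T - M - 1).
Proof.
elim: M => [|M IH] h; first by rewrite big_geq.
rewrite big_nat_recr //= mulnDr IH; last by lia.
nia.
Qed.

Lemma transf (P : nat -> nat -> bool) N :
  \sum_(1 <= n1 < N.+1) \sum_(1 <= n2 < N.+1) \sum_(1 <= n3 < N.+1)
    ((n1 + n2 + n3 == N) && P n2 n3)
  = \sum_(1 <= n2 < N.+1) \sum_(1 <= n3 < N.+1) (P n2 n3 * (n2 + n3 < N)).
Proof.
rewrite exchange_big /=.
apply: eq_bigr => n2 _.
rewrite exchange_big /=.
apply: eq_bigr => n3 _.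
under eq_bigr => n1 _ do rewrite -addnA -mulnb mulnC.
by rewrite -big_distrr /= sum_eq; congr (_ * _); case: (ltnP (n2 + n3) N) => h //=; lia.
Qed.

Lemma upper (P : nat -> nat -> bool) N :
  2 * (\sum_(1 <= n2 < N.+1) \sum_(1 <= n3 < N.+1) (P n2 n3 * (n2 + n3 < N)))
  <= N ^ 2.
Proof.
apply: (@leq_trans (2 * \sum_(1 <= i < N.+1) (N - i))).
  rewrite leq_mul2l; apply/orP; right; apply: leq_sum => i _.
  apply: (@leq_trans (\sum_(1 <= j < N.+1) (i + j < N))).
    apply: leq_sum => j _; by case: (P i j); rewrite ?mul1n ?mul0n.
  rewrite sum_lt; lia.
rewrite gauss //; nia.
Qed.

Lemma digits_last (b : nat) : 2 <= b -> forall k fuel n,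
  b ^ k <= n < 2 * b ^ k -> n <= fuel ->
  exists s, digits_aux b fuel n = rcons s 1.
Proof.
move=> hb; elim=> [|k IH] [|f] n /andP [h1 h2] hf.
- lia.
- have -> : n = 1 by rewrite expn0 in h1 h2; lia.
  exists [::]; rewrite /= modn_small ?divn_small; try lia. by clear hf; case: f.
- have : 0 < b ^ k.+1 by rewrite expn_gt0; lia.
  lia.
- have hpos : 0 < b ^ k.+1 by rewrite expn_gt0; lia.
  have hn : n != 0 by lia.
  have [s Hs] : exists s, digits_aux b f (n %/ b) = rcons s 1.
    apply: IH.
      rewrite leq_divRL ?ltn_divLR; try lia.
      rewrite expnS in h1 h2; apply/andP; split; lia.
    have := @ltn_Pdiv n b hb; lia.
  by exists (n %% b :: s); rewrite /= (negbTE hn) Hs.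
Qed.

Lemma cop (b k n : nat) : 2 <= b -> b ^ k <= n < 2 * b ^ k ->
  coprime (digrev b n) b.
Proof.
move=> hb hn.
have [s Hs] := @digits_last b hb k n n hn (leqnn n).
rewrite /digrev /digits Hs foldl_rcons /coprime gcdnC gcdnMDl gcdn1 //.
Qed.

Theorem lemma4p1 (b : nat) : 2 <= b ->
  exists N0 : nat, forall N : nat, N0 <= N ->
    [/\ N ^ 2 <= 16 * b ^ 2 * S12 b N, 2 * S12 b N <= N ^ 2,
        N ^ 2 <= 8 * b * S21 b N & 2 * S21 b N <= N ^ 2].
Proof.
move=> hb; exists 4 => N hN.
have HS12 : S12 b N = \sum_(1 <= n2 < N.+1) \sum_(1 <= n3 < N.+1)
   (coprime (digrev b n2 * digrev b n3) b * (n2 + n3 < N))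
  := transf (fun n2 n3 => coprime (digrev b n2 * digrev b n3) b) N.
have HS21 : S21 b N = \sum_(1 <= n2 < N.+1) \sum_(1 <= n3 < N.+1)
   (coprime (digrev b n3) b * (n2 + n3 < N))
  := transf (fun n2 n3 => coprime (digrev b n3) b) N.
have hpos : 0 < N %/ 4 by lia.
have := trunc_logP hb hpos; have := trunc_log_ltn (N %/ 4) hb.
set k := trunc_log b (N %/ 4); rewrite expnS => hB2 hB1.
set B := b ^ k in hB1 hB2.
have hB0 : 0 < B by rewrite expn_gt0; lia.
have h4B : 4 * B <= N by lia.
have hNB : N < 4 * (b * B) by lia.
have hc : forall j, B <= j < B + B -> coprime (digrev b j) b.
  by move=> j hj; apply: (@cop b k) => //; rewrite -/B; lia.
split.
- apply: (@leq_trans (16 * b ^ 2 * (B * B))); first nia.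
  rewrite leq_mul2l; apply/orP; right.
  rewrite HS12.
  have -> : B * B = \sum_(B <= i < B + B) \sum_(B <= j < B + B) 1.
    rewrite !sum_nat_const_nat; lia.
  apply: (@leq_trans (\sum_(B <= i < B + B) \sum_(1 <= j < N.+1)
     (coprime (digrev b i * digrev b j) b * (i + j < N)))); last first.
    apply: restr; lia.
  apply: leq_sum_nat => i hi.
  apply: (@leq_trans (\sum_(B <= j < B + B)
     (coprime (digrev b i * digrev b j) b * (i + j < N)))); last first.
    apply: restr; lia.
  apply: leq_sum_nat => j hj.
  rewrite coprimeMl !hc // (_ : i + j < N) //; lia.
- by rewrite HS12 upper.
- apply: (@leq_trans (8 * b * ((N - 2 * B) * B))); first nia.
  rewrite leq_mul2l; apply/orP; right.
  rewrite HS21.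
  have -> : (N - 2 * B) * B = \sum_(1 <= i < (N - 2 * B).+1) \sum_(B <= j < B + B) 1.
    rewrite !sum_nat_const_nat; lia.
  apply: (@leq_trans (\sum_(1 <= i < (N - 2 * B).+1) \sum_(1 <= j < N.+1)
     (coprime (digrev b j) b * (i + j < N)))); last first.
    apply: restr; lia.
  apply: leq_sum_nat => i hi.
  apply: (@leq_trans (\sum_(B <= j < B + B)
     (coprime (digrev b j) b * (i + j < N)))); last first.
    apply: restr; lia.
  apply: leq_sum_nat => j hj.
  rewrite hc // (_ : i + j < N) //; lia.
- by rewrite HS21 upper.
Qed.
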